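(* If $\kappa$ is an uncountable cardinal with $\kappa=\kappa^{<\kappa}$, then every non-empty open subset of ${}^\kappa\kappa$ is equal to the image of ${}^\kappa\kappa$ under an injective continuous function ${}^\kappa\kappa\to{}^\kappa\kappa$.
   Context: ${}^\kappa\kappa$ carries the topology whose basic open sets are $N_s=\{x\in{}^\kappa\kappa : s\subseteq x\}$ for $s$ a function from some ordinal $\alpha<\kappa$ to $\kappa$. *)

(* Defs.v *)
(* A cardinal kappa is represented as a type K carrying a strict
   well-order lt whose order type is an initial ordinal. *)
From Stdlib Require Import Relations Wellfounded.

Definition injective {A B : Type} (f : A -> B) : Prop :=
  forall x y, f x = f y -> x = y.

Definition strict_well_order (K : Type) (lt : K -> K -> Prop) : Prop :=
  well_founded lt /\
  (forall a b c, lt a b -> lt b c -> lt a c) /\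
  (forall a b, lt a b \/ a = b \/ lt b a).

Definition below {K : Type} (lt : K -> K -> Prop) (a : K) : Type := {b : K | lt b a}.

Definition is_cardinal (K : Type) (lt : K -> K -> Prop) : Prop :=
  strict_well_order K lt /\
  forall a : K, ~ exists f : K -> below lt a, injective f.

Definition uncountable (K : Type) : Prop := ~ exists f : K -> nat, injective f.

(* kappa^{<kappa} = kappa : the set of functions from some ordinal a < kappa
   to kappa injects into kappa (the reverse inequality is trivial) *)
Definition kappa_lt_kappa_eq (K : Type) (lt : K -> K -> Prop) : Prop :=
  exists f : {a : K & (below lt a -> K)} -> K, injective f.

(* generalized Baire space ^kappa kappa: functions K -> K.
   Basic open set N_s for s : a -> K, a < kappa. *)
Definition N_s {K : Type} (lt : K -> K -> Prop) (a : K) (s : below lt a -> K)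
  : (K -> K) -> Prop :=
  fun x => forall b : below lt a, x (proj1_sig b) = s b.

Definition bopen {K : Type} (lt : K -> K -> Prop) (U : (K -> K) -> Prop) : Prop :=
  forall x, U x -> exists (a : K) (s : below lt a -> K),
    N_s lt a s x /\ forall y, N_s lt a s y -> U y.

Definition bcontinuous {K : Type} (lt : K -> K -> Prop) (f : (K -> K) -> (K -> K)) : Prop :=
  forall U, bopen lt U -> bopen lt (fun x => U (f x)).

(* Main.v *)
Require Import Defs.
From Stdlib Require Import Relations Wellfounded.
From Stdlib Require Import Classical ClassicalEpsilon FunctionalExtensionality ProofIrrelevance.

Definition emi := excluded_middle_informative.

Lemma sig_ext {A : Type} {P : A -> Prop} (u v : {a | P a}) :
  proj1_sig u = proj1_sig v -> u = v.
Proof. destruct u, v; simpl; intros; subst; f_equal; apply proof_irrelevance. Qed.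

Section SB.
Variables A B : Type.
Variable f : A -> B.
Variable g : B -> A.
Hypothesis Hf : injective f.
Hypothesis Hg : injective g.

Definition inC (a : A) : Prop :=
  exists n a0, (forall b, g b <> a0) /\ a = Nat.iter n (fun z => g (f z)) a0.

Lemma notC_range a : ~ inC a -> exists b, g b = a.
Proof.
  intros H. apply NNPP. intro H'. apply H. exists 0, a. split; [|reflexivity].
  intros b Hb. apply H'. eauto.
Qed.

Definition ginv (a : A) (H : ~ inC a) : B :=
  proj1_sig (constructive_indefinite_description _ (notC_range a H)).

Lemma ginv_spec a H : g (ginv a H) = a.
Proof. unfold ginv. destruct constructive_indefinite_description; auto. Qed.

Definition hSB (a : A) : B :=
  match emi (inC a) with left _ => f a | right H => ginv a H end.

Lemma SB : exists h : A -> B, injective h /\ (forall b, exists a, h a = b).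
Proof.
  exists hSB. split.
  - intros a1 a2. unfold hSB.
    destruct (emi (inC a1)) as [C1|C1], (emi (inC a2)) as [C2|C2]; intro E.
    + apply Hf; auto.
    + exfalso. apply C2. rewrite <- (ginv_spec a2 C2), <- E.
      destruct C1 as [n [a0 [Ha0 ->]]]. exists (S n), a0. split; auto.
    + exfalso. apply C1. rewrite <- (ginv_spec a1 C1), E.
      destruct C2 as [n [a0 [Ha0 ->]]]. exists (S n), a0. split; auto.
    + rewrite <- (ginv_spec a1 C1), <- (ginv_spec a2 C2), E. reflexivity.
  - intro b. destruct (emi (inC (g b))) as [C|C].
    + destruct C as [n [a0 [Ha0 Hn]]]. destruct n as [|n].
      * simpl in Hn. exfalso; eapply Ha0; eauto.
      * simpl in Hn. apply Hg in Hn. exists (Nat.iter n (fun z => g (f z)) a0).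
        unfold hSB. destruct emi as [C'|C'].
        -- symmetry; auto.
        -- exfalso; apply C'; exists n, a0; auto.
    + exists (g b). unfold hSB. destruct emi; [contradiction|]. apply Hg. apply ginv_spec.
Qed.
End SB.

Section Main.
Variable K : Type.
Variable lt : K -> K -> Prop.
Hypothesis Hwf : well_founded lt.
Hypothesis Htr : forall a b c, lt a b -> lt b c -> lt a c.
Hypothesis Htri : forall a b, lt a b \/ a = b \/ lt b a.
Hypothesis Hcd : forall a : K, ~ exists f : K -> below lt a, injective f.
Hypothesis Hunc : uncountable K.
Variable e : {a : K & (below lt a -> K)} -> K.
Hypothesis He : injective e.
Variable k0 : K.

Lemma irr a : ~ lt a a.
Proof.
  induction a as [a IH] using (well_founded_induction Hwf). intro H. exact (IH a H H).
Qed.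

Lemma least_ex (P : K -> Prop) : (exists k, P k) -> exists k, P k /\ forall j, P j -> ~ lt j k.
Proof.
  intros [k Hk]. apply NNPP. intro Hn.
  assert (H : forall k, ~ P k).
  { intro k'. induction k' as [k' IH] using (well_founded_induction Hwf). intro Pk.
    apply Hn. exists k'. split; auto. intros j Pj Ljk. exact (IH j Ljk Pj). }
  exact (H k Hk).
Qed.

Definition least (P : K -> Prop) : K :=
  match emi (exists k, P k) with
  | left H => proj1_sig (constructive_indefinite_description _ (least_ex P H))
  | right _ => k0 end.

Lemma least_spec P : (exists k, P k) -> P (least P) /\ forall j, P j -> ~ lt j (least P).
Proof.
  intro H. unfold least. destruct (emi _) as [H'|H']; [|contradiction].
  destruct (constructive_indefinite_description _ _) as [k Hk]. exact Hk.
Qed.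

Lemma least_eq P k : P k -> (forall j, P j -> ~ lt j k) -> least P = k.
Proof.
  intros Pk Hk. destruct (least_spec P (ex_intro _ k Pk)) as [H1 H2].
  destruct (Htri (least P) k) as [L|[E|L]]; auto.
  - exfalso; exact (Hk _ H1 L).
  - exfalso; exact (H2 _ Pk L).
Qed.

Definition z0 := least (fun _ => True).
Lemma z0_least k : ~ lt k z0.
Proof. destruct (least_spec (fun _ => True) (ex_intro _ k0 I)) as [_ H]. exact (H k I). Qed.
Lemma z0_le k : k = z0 \/ lt z0 k.
Proof.
  destruct (Htri k z0) as [L|[E|L]]; auto. exfalso; exact (z0_least _ L).
Qed.

Lemma no_max m : exists b, lt m b.
Proof.
  apply NNPP; intro Hm.
  assert (Hmax : forall b, b = m \/ lt b m).
  { intro b. destruct (Htri b m) as [L|[E|L]]; auto. exfalso; eauto. }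
  destruct (classic (m = z0)) as [Em|Nm].
  - apply Hunc. exists (fun _ => 0). intros x y _.
    destruct (Hmax x) as [Ex|Lx]; destruct (Hmax y) as [Ey|Ly]; try congruence;
      rewrite Em in *; exfalso; eapply z0_least; eauto.
  - assert (Lz : lt z0 m). { destruct (z0_le m); [contradiction|auto]. }
    set (phi := fun k : K => e (existT (fun a => below lt a -> K) m (fun _ => k))).
    set (p := e (existT (fun a => below lt a -> K) z0 (fun _ => k0))).
    assert (phi_inj : injective phi).
    { intros x y E. apply He in E. apply inj_pair2 in E.
      exact (f_equal (fun F => F (exist _ z0 Lz)) E). }
    assert (phi_p : forall k, phi k <> p).
    { intros k E. apply He in E. apply (f_equal (@projT1 _ _)) in E. simpl in E.
      apply Nm; exact E. }
    set (tau := fun x : K => if emi (x = p) then m else if emi (x = m) then p else x).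
    assert (tau_inj : injective tau).
    { intros x y. unfold tau.
      destruct (emi (x = p)), (emi (x = m)), (emi (y = p)), (emi (y = m)); intro E; congruence. }
    assert (tau_ne : forall k, tau (phi k) <> m).
    { intros k. unfold tau. destruct (emi (phi k = p)) as [E|E].
      - exfalso; exact (phi_p k E).
      - destruct (emi (phi k = m)) as [E'|E']; auto. intro E''. apply E. congruence. }
    assert (Hl : forall k, lt (tau (phi k)) m).
    { intro k. destruct (Hmax (tau (phi k))) as [E|L]; auto. exfalso; exact (tau_ne k E). }
    apply (Hcd m). exists (fun k => exist _ (tau (phi k)) (Hl k)).
    intros x y E. apply (f_equal (@proj1_sig _ _)) in E. simpl in E.
    apply phi_inj, tau_inj; auto.
Qed.

Lemma e1_ex : exists e1, lt z0 e1.
Proof. apply no_max. Qed.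
Definition e1 := proj1_sig (constructive_indefinite_description _ e1_ex).
Lemma e1_spec : lt z0 e1.
Proof. unfold e1. destruct constructive_indefinite_description; auto. Qed.

Lemma bnd_ex (a : K) : exists b, lt a b /\ lt e1 b.
Proof.
  destruct (Htri a e1) as [L|[E|L]].
  - destruct (no_max e1) as [b Hb]. exists b; eauto.
  - subst. destruct (no_max e1) as [b Hb]. exists b; eauto.
  - destruct (no_max a) as [b Hb]. exists b; eauto.
Qed.

Definition Seq := {a : K & below lt a -> K}.
Definition bS (s : Seq) : K :=
  proj1_sig (constructive_indefinite_description _ (bnd_ex (projT1 s))).
Lemma bS_spec s : lt (projT1 s) (bS s) /\ lt e1 (bS s).
Proof. unfold bS. destruct constructive_indefinite_description; auto. Qed.
Lemma z0_bS s : lt z0 (bS s).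
Proof. eapply Htr. apply e1_spec. apply bS_spec. Qed.

Variable U : (K -> K) -> Prop.
Hypothesis HU : bopen lt U.
Variable x0 : K -> K.
Hypothesis Hx0 : U x0.

Definition restr (x : K -> K) (a : K) : below lt a -> K := fun c => x (proj1_sig c).
Definition good (x : K -> K) (a : K) := forall y, N_s lt a (restr x a) y -> U y.
Definition alpha x := least (good x).
Definition r x : Seq := existT _ (alpha x) (restr x (alpha x)).

Lemma good_ex x : U x -> exists a, good x a.
Proof.
  intro Ux. destruct (HU x Ux) as [a [s [Hs Hsub]]]. exists a. intros y Hy.
  apply Hsub. intro c. rewrite Hy. unfold restr. apply Hs.
Qed.

Lemma agree_good x y a : (forall c, lt c a -> y c = x c) -> good x a -> good y a.
Proof.
  intros H G w Hw. apply G. intro c. rewrite Hw. unfold restr. apply H. apply (proj2_sig c).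
Qed.

Lemma r_same x y : U x -> N_s lt (alpha x) (restr x (alpha x)) y -> r y = r x.
Proof.
  intros Ux Hy.
  assert (Hag : forall c, lt c (alpha x) -> y c = x c).
  { intros c Hc. exact (Hy (exist _ c Hc)). }
  destruct (least_spec (good x) (good_ex x Ux)) as [G1 G2].
  assert (Ea : alpha y = alpha x).
  { unfold alpha. apply least_eq.
    - apply agree_good with x; auto.
    - intros j Gj Lj. apply (G2 j); auto. apply agree_good with y; auto.
      intros c Hc. symmetry. apply Hag. eauto. }
  unfold r. rewrite Ea. f_equal. apply functional_extensionality. intros [c Hc].
  unfold restr; simpl. apply Hag; auto.
Qed.

Definition J (s : Seq) := exists x, U x /\ r x = s.

Lemma J_N s y : J s -> N_s lt (projT1 s) (projT2 s) y -> U y /\ r y = s.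
Proof.
  intros [x [Ux <-]] Hy. unfold r in Hy. simpl in Hy. split.
  - destruct (least_spec (good x) (good_ex x Ux)) as [G1 _]. apply G1. exact Hy.
  - apply r_same; auto.
Qed.

Definition g (i : K) : Seq :=
  match emi (exists s, J s /\ e s = i) with
  | left H => proj1_sig (constructive_indefinite_description _ H)
  | right _ => r x0 end.

Lemma g_J i : J (g i).
Proof.
  unfold g. destruct emi as [H|H].
  - destruct constructive_indefinite_description as [s [Js Es]]; simpl; auto.
  - exists x0; auto.
Qed.

Lemma g_e s : J s -> g (e s) = s.
Proof.
  intro Js. unfold g. destruct emi as [H|H].
  - destruct constructive_indefinite_description as [s' [Js' E]]; simpl. apply He; auto.
  - exfalso; apply H; eauto.
Qed.

Definition Dt (s : Seq) := {w : below lt (bS s) -> K |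
  forall c : below lt (bS s), proj1_sig c = z0 -> g (w c) = s}.
Definition Tt (s : Seq) := {t : below lt (bS s) -> K |
  forall (c : below lt (bS s)) (h : lt (proj1_sig c) (projT1 s)),
    t c = projT2 s (exist _ (proj1_sig c) h)}.

Definition F1fun s k : below lt (bS s) -> K := fun c =>
  match emi (lt (proj1_sig c) (projT1 s)) with
  | left h => projT2 s (exist (fun b => lt b (projT1 s)) (proj1_sig c) h)
  | right _ => k end.
Lemma F1_ok s k : forall (c : below lt (bS s)) (h : lt (proj1_sig c) (projT1 s)),
    F1fun s k c = projT2 s (exist _ (proj1_sig c) h).
Proof.
  intros c h. unfold F1fun. destruct emi as [h'|h'].
  - f_equal. f_equal. apply proof_irrelevance.
  - contradiction.
Qed.
Definition F1 s (w : Dt s) : Tt s :=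
  exist _ (F1fun s (e (existT _ (bS s) (proj1_sig w)))) (F1_ok s _).

Definition F2fun s (i k : K) : below lt (bS s) -> K := fun c =>
  if emi (proj1_sig c = z0) then i else k.
Lemma F2_ok s : J s -> forall k (c : below lt (bS s)), proj1_sig c = z0 -> g (F2fun s (e s) k c) = s.
Proof.
  intros Js k c Ec. unfold F2fun. destruct emi; [|contradiction]. apply g_e; auto.
Qed.
Definition F2 s (Js : J s) (t : Tt s) : Dt s :=
  exist _ (F2fun s (e s) (e (existT _ (bS s) (proj1_sig t)))) (F2_ok s Js _).

Lemma bij_ex s : J s -> exists h : Dt s -> Tt s, injective h /\ (forall t, exists w, h w = t).
Proof.
  intro Js. destruct (bS_spec s) as [Hab He1b].
  apply (SB _ _ (F1 s) (F2 s Js)).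
  - intros w1 w2 E. apply (f_equal (@proj1_sig _ _)) in E. simpl in E.
    apply (f_equal (fun F => F (exist _ (projT1 s) Hab))) in E. revert E.
    unfold F1fun. simpl. destruct (emi _) as [h|_].
    + exfalso; exact (irr _ h).
    + intro E. apply He in E. apply inj_pair2 in E. apply sig_ext; auto.
  - intros w1 w2 E. apply (f_equal (@proj1_sig _ _)) in E. simpl in E.
    apply (f_equal (fun F => F (exist _ e1 He1b))) in E. revert E.
    unfold F2fun. simpl. destruct (emi _) as [h|_].
    + exfalso. pose proof e1_spec as H1. rewrite h in H1. exact (irr _ H1).
    + intro E. apply He in E. apply inj_pair2 in E. apply sig_ext; auto.
Qed.

Definition Psi s (p : J s) : Dt s -> Tt s :=
  proj1_sig (constructive_indefinite_description _ (bij_ex s p)).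
Lemma Psi_inj s p : injective (Psi s p).
Proof. unfold Psi. destruct constructive_indefinite_description as [h [H1 H2]]; auto. Qed.
Lemma Psi_surj s p t : exists w, Psi s p w = t.
Proof. unfold Psi. destruct constructive_indefinite_description as [h [H1 H2]]; auto. Qed.

Definition Fdef s (p : J s) (x : K -> K)
  (hx : forall c : below lt (bS s), proj1_sig c = z0 -> g (restr x (bS s) c) = s) : K -> K :=
  fun b => match emi (lt b (bS s)) with
  | left h => proj1_sig (Psi s p (exist _ (restr x (bS s)) hx : Dt s)) (exist _ b h)
  | right _ => x b end.

Lemma hx_of x : forall c : below lt (bS (g (x z0))), proj1_sig c = z0 ->
  g (restr x (bS (g (x z0))) c) = g (x z0).
Proof. intros [c Hc] E. simpl in E. subst. reflexivity. Qed.

Definition fmap x := Fdef (g (x z0)) (g_J (x z0)) x (hx_of x).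

Lemma fmap_eq x s p hx : g (x z0) = s -> fmap x = Fdef s p x hx.
Proof. intro E. subst s. unfold fmap. f_equal; apply proof_irrelevance. Qed.

Lemma Fdef_below s p x hx : forall c : below lt (projT1 s), Fdef s p x hx (proj1_sig c) = projT2 s c.
Proof.
  intros [c Hc]. simpl. unfold Fdef. destruct emi as [h|h].
  - destruct (Psi s p _) as [t Ht]. simpl. rewrite (Ht (exist _ c h) Hc). reflexivity.
  - exfalso. apply h. eapply Htr; eauto. apply bS_spec.
Qed.

Lemma fmap_U x : U (fmap x) /\ r (fmap x) = g (x z0).
Proof. apply J_N. apply g_J. intro c. unfold fmap. apply Fdef_below. Qed.

Lemma Fdef_inj s p x y hx hy : Fdef s p x hx = Fdef s p y hy -> x = y.
Proof.
  intro E.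
  assert (EW : (exist _ (restr x (bS s)) hx : Dt s) = exist _ (restr y (bS s)) hy).
  { apply (Psi_inj s p). apply sig_ext. apply functional_extensionality. intros [c Hc].
    pose proof (f_equal (fun F => F c) E) as Ec. revert Ec. unfold Fdef.
    destruct (emi (lt c (bS s))) as [h|h]; intro Ec.
    - replace Hc with h by apply proof_irrelevance. exact Ec.
    - contradiction. }
  apply (f_equal (@proj1_sig _ _)) in EW. simpl in EW.
  apply functional_extensionality. intro c.
  destruct (emi (lt c (bS s))) as [h|h].
  - exact (f_equal (fun F => F (exist _ c h)) EW).
  - pose proof (f_equal (fun F => F c) E) as Ec. revert Ec. unfold Fdef.
    destruct (emi (lt c (bS s))); [contradiction|auto].
Qed.

Lemma fmap_inj : injective fmap.
Proof.
  intros x y E.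
  assert (Es : g (y z0) = g (x z0)).
  { rewrite <- (proj2 (fmap_U x)), <- (proj2 (fmap_U y)), E. reflexivity. }
  pose proof (g_J (x z0)) as p.
  assert (hy : forall c : below lt (bS (g (x z0))), proj1_sig c = z0 ->
      g (restr y (bS (g (x z0))) c) = g (x z0)).
  { intros [c Hc] Ec. simpl in Ec. subst c. unfold restr; simpl. exact Es. }
  rewrite (fmap_eq x (g (x z0)) p (hx_of x) eq_refl) in E.
  rewrite (fmap_eq y (g (x z0)) p hy Es) in E.
  eapply Fdef_inj; eauto.
Qed.

Lemma fmap_onto z : U z -> exists x, fmap x = z.
Proof.
  intro Uz.
  set (s := r z). assert (Js : J s) by (exists z; auto).
  assert (Ht : forall (c : below lt (bS s)) (h : lt (proj1_sig c) (projT1 s)),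
      restr z (bS s) c = projT2 s (exist _ (proj1_sig c) h)).
  { intros c h. unfold s, r. simpl. unfold restr. reflexivity. }
  destruct (Psi_surj s Js (exist _ (restr z (bS s)) Ht)) as [w Hw].
  set (x := fun b => match emi (lt b (bS s)) with
                     | left h => proj1_sig w (exist _ b h) | right _ => z b end).
  assert (Hxr : restr x (bS s) = proj1_sig w).
  { apply functional_extensionality. intros [c Hc]. unfold restr, x; simpl.
    destruct emi as [h|h].
    - replace h with Hc by apply proof_irrelevance; reflexivity.
    - contradiction. }
  assert (Hgx : g (x z0) = s).
  { pose proof (z0_bS s) as Hz.
    change (x z0) with (restr x (bS s) (exist _ z0 Hz)). rewrite Hxr.
    apply (proj2_sig w). reflexivity. }
  assert (hx : forall c : below lt (bS s), proj1_sig c = z0 -> g (restr x (bS s) c) = s).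
  { rewrite Hxr. exact (proj2_sig w). }
  exists x. rewrite (fmap_eq x s Js hx Hgx).
  assert (EW : (exist _ (restr x (bS s)) hx : Dt s) = w) by (apply sig_ext; exact Hxr).
  apply functional_extensionality. intro b. unfold Fdef. rewrite EW, Hw. simpl.
  unfold x. destruct emi; reflexivity.
Qed.

Lemma Fdef_agree s p x y hx hy b :
  (forall c, lt c (bS s) -> y c = x c) -> (~ lt b (bS s) -> y b = x b) ->
  Fdef s p y hy b = Fdef s p x hx b.
Proof.
  intros H1 H2.
  assert (EW : (exist _ (restr y (bS s)) hy : Dt s) = exist _ (restr x (bS s)) hx).
  { apply sig_ext. apply functional_extensionality. intros [c Hc]. apply H1; auto. }
  unfold Fdef. rewrite EW. destruct emi; auto.
Qed.

Lemma fmap_cont : bcontinuous lt fmap.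
Proof.
  intros V HV x Vx. destruct (HV (fmap x) Vx) as [a' [s' [Hs' Hsub]]].
  assert (HM : exists M, (lt a' M \/ a' = M) /\ (lt (bS (g (x z0))) M \/ bS (g (x z0)) = M)).
  { destruct (Htri a' (bS (g (x z0)))) as [L|[E|L]].
    - exists (bS (g (x z0))); auto.
    - exists a'; auto.
    - exists a'; auto. }
  destruct HM as [M [HaM HBM]].
  exists M, (restr x M). split. { intro c; reflexivity. }
  intros y Hy.
  assert (Hag : forall c, lt c M -> y c = x c) by (intros c Hc; exact (Hy (exist _ c Hc))).
  assert (lt_M : forall c, lt c (bS (g (x z0))) -> lt c M).
  { intros c Hc. destruct HBM as [L|E]; [eauto|subst; auto]. }
  assert (Es : g (y z0) = g (x z0)). { f_equal. apply Hag. apply lt_M. apply z0_bS. }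
  pose proof (g_J (x z0)) as p.
  assert (hy : forall c : below lt (bS (g (x z0))), proj1_sig c = z0 ->
      g (restr y (bS (g (x z0))) c) = g (x z0)).
  { intros [c Hc] Ec. simpl in Ec. subst c. unfold restr; simpl. exact Es. }
  rewrite (fmap_eq y (g (x z0)) p hy Es). apply Hsub. intro c.
  rewrite <- Hs'. rewrite (fmap_eq x (g (x z0)) p (hx_of x) eq_refl).
  apply Fdef_agree.
  - intros; apply Hag; auto.
  - intros _. apply Hag. destruct c as [c Hc]; simpl. destruct HaM as [L|E]; [eauto|subst; auto].
Qed.

Lemma main_sec : exists f : (K -> K) -> (K -> K),
    injective f /\ bcontinuous lt f /\ (forall y, U y <-> exists x, f x = y).
Proof.
  exists fmap. split; [exact fmap_inj|]. split; [exact fmap_cont|].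
  intro y. split.
  - apply fmap_onto.
  - intros [x <-]. apply fmap_U.
Qed.

End Main.

Theorem proposition1p7 (K : Type) (lt : K -> K -> Prop)
  (Hcard : is_cardinal K lt) (Hunc : uncountable K)
  (Hkk : kappa_lt_kappa_eq K lt)
  (U : (K -> K) -> Prop) (HU : bopen lt U) (Hne : exists x, U x) :
  exists f : (K -> K) -> (K -> K),
    injective f /\ bcontinuous lt f /\
    (forall y, U y <-> exists x, f x = y).
Proof.
  destruct Hcard as [[Hwf [Htr Htri]] Hcd]. destruct Hkk as [e He].
  destruct Hne as [x0 Hx0].
  destruct (classic (exists k : K, True)) as [[k0 _]|Hn].
  2: { exfalso. apply Hunc. exists (fun _ => 0). intros a. exfalso. apply Hn; eauto. }
  eapply main_sec; eauto.
Qed.
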